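(* A cancellative category $\mathcal C$ admits conditional weak left-lcms if and only if $\mathcal C$ is a strong Garside family in itself.
   Context: A category is cancellative if $fg=fg'\Rightarrow g=g'$ and $gf=g'f\Rightarrow g=g'$. $f\preccurlyeq g$ means $g=fg'$ for some $g'$. Two elements $f,g$ with the same source are left-disjoint if whenever $h\preccurlyeq h'f$ and $h\preccurlyeq h'g$, then $h\preccurlyeq h'$. An element $h$ is a weak left-lcm of $f,g$ (same target) if $h$ is a common left-multiple of $f$ and $g$ and every common left-multiple of $f$ and $g$ that admits a common left-multiple with $h$ is a left-multiple of $h$. $\mathcal C$ admits conditional weak left-lcms if, whenever $f,g$ admit a common left-multiple $h_0$, they admit a weak left-lcm $h$ such that $h_0$ is a left-multiple of $h$. $\mathcal C$ is a strong Garside family in itself if for all $f,g,s,t\in\mathcal C$ with $fs=gt$ there exist $f',g',h\in\mathcal C$ such that $f'$ and $g'$ are left-disjoint, $f's=g't$, $f=hf'$ and $g=hg'$. *)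

(* Defs.v *)
(* Composition is written in diagrammatic order, as in the paper:
   for f : x -> y and g : y -> z, comp f g : x -> z is "fg". *)
Set Implicit Arguments.

Record Category := {
  Ob : Type;
  Hom : Ob -> Ob -> Type;
  idm : forall x, Hom x x;
  comp : forall x y z, Hom x y -> Hom y z -> Hom x z;
  comp_assoc : forall x y z w (f : Hom x y) (g : Hom y z) (h : Hom z w),
      comp (comp f g) h = comp f (comp g h);
  comp_id_l : forall x y (f : Hom x y), comp (idm x) f = f;
  comp_id_r : forall x y (f : Hom x y), comp f (idm y) = f
}.

Arguments comp {c x y z} _ _.
Arguments idm {c} x.

Section Defs.
Variable C : Category.

Definition cancellative : Prop :=
  (forall x y z (f : Hom C x y) (g g' : Hom C y z), comp f g = comp f g' -> g = g') /\
  (forall x y z (f : Hom C y z) (g g' : Hom C x y), comp g f = comp g' f -> g = g').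

Definition left_div {x y z} (f : Hom C x y) (g : Hom C x z) : Prop :=
  exists g' : Hom C y z, g = comp f g'.

Definition left_disjoint {x y y'} (f : Hom C x y) (g : Hom C x y') : Prop :=
  forall w v (h : Hom C w v) (h' : Hom C w x),
    left_div h (comp h' f) -> left_div h (comp h' g) -> left_div h h'.

Definition left_mult {w x z} (h : Hom C w z) (f : Hom C x z) : Prop :=
  exists f' : Hom C w x, h = comp f' f.

Definition common_left_mult {w x y z} (h : Hom C w z) (f : Hom C x z) (g : Hom C y z) : Prop :=
  left_mult h f /\ left_mult h g.

Definition have_common_left_mult {w1 w z} (h1 : Hom C w1 z) (h : Hom C w z) : Prop :=
  exists w2 (a : Hom C w2 w1) (b : Hom C w2 w), comp a h1 = comp b h.

Definition weak_left_lcm {w x y z} (h : Hom C w z) (f : Hom C x z) (g : Hom C y z) : Prop :=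
  common_left_mult h f g /\
  forall w1 (h1 : Hom C w1 z),
    common_left_mult h1 f g -> have_common_left_mult h1 h -> left_mult h1 h.

Definition admits_conditional_weak_left_lcms : Prop :=
  forall x y z (f : Hom C x z) (g : Hom C y z) w0 (h0 : Hom C w0 z),
    common_left_mult h0 f g ->
    exists w (h : Hom C w z), weak_left_lcm h f g /\ left_mult h0 h.

Definition strong_Garside_in_itself : Prop :=
  forall x y y' z (f : Hom C x y) (g : Hom C x y') (s : Hom C y z) (t : Hom C y' z),
    comp f s = comp g t ->
    exists w (f' : Hom C w y) (g' : Hom C w y') (h : Hom C x w),
      left_disjoint f' g' /\ comp f' s = comp g' t /\ f = comp h f' /\ g = comp h g'.

End Defs.

(* Main.v *)
Require Import Defs.

Theorem mainTheorem5 (C : Category) (HC : cancellative C) :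
  admits_conditional_weak_left_lcms C <-> strong_Garside_in_itself C.
Proof.
  destruct HC as [LC RC].
  split.
  - intros H x y y' z f g s t Hfs.
    destruct (H y y' z s t x (comp f s)) as [w [h [[[[f' Hf'] [g' Hg']] Hw] [h'' Hh'']]]].
    { split; [exists f | exists g]; auto. }
    exists w, f', g', h''.
    split; [| split; [| split]].
    + intros w1 v h1 h2 [a Ha] [b Hb].
      assert (Hk : comp a s = comp b t).
      { apply (LC _ _ _ h1). rewrite <- !comp_assoc, <- Ha, <- Hb.
        rewrite !comp_assoc, <- Hf', <- Hg'. reflexivity. }
      destruct (Hw v (comp a s)) as [c Hc].
      * split; [exists a | exists b]; auto.
      * exists w1, h1, h2. rewrite <- comp_assoc, <- Ha, comp_assoc, <- Hf'. reflexivity.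
      * exists c. apply (RC _ _ _ h). rewrite comp_assoc, <- Hc.
        rewrite <- comp_assoc, <- Ha, comp_assoc, <- Hf'. reflexivity.
    + congruence.
    + apply (RC _ _ _ s). rewrite comp_assoc, <- Hf'. exact Hh''.
    + apply (RC _ _ _ t). rewrite comp_assoc, <- Hg', <- Hh''. symmetry; exact Hfs.
  - intros H x y z f g w0 h0 [[a Ha] [b Hb]].
    destruct (H w0 x y z a b f g) as [w [f' [g' [h [Hd [Heq [Ha' Hb']]]]]]].
    { congruence. }
    exists w, (comp f' f). split; [split; [split |] |].
    + exists f'. reflexivity.
    + exists g'. exact Heq.
    + intros w1 h1 [[c Hc] [d Hd']] [w2 [p [q Hpq]]].
      assert (E1 : comp p c = comp q f').
      { apply (RC _ _ _ f). rewrite !comp_assoc, <- Hc. exact Hpq. }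
      assert (E2 : comp p d = comp q g').
      { apply (RC _ _ _ g). rewrite !comp_assoc, <- Hd', <- Heq. exact Hpq. }
      destruct (Hd _ _ p q) as [e He].
      * exists c. symmetry; exact E1.
      * exists d. symmetry; exact E2.
      * exists e. apply (LC _ _ _ p). rewrite Hpq, He, comp_assoc. reflexivity.
    + exists h. rewrite Ha, Ha', comp_assoc. reflexivity.
Qed.
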